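(* Let $n=p_1^{\alpha_1}p_2^{\alpha_2}\cdots p_k^{\alpha_k}$ where $p_1,\dots,p_k$ are distinct primes, $\alpha_i\geq 1$, and $k\geq 5$. Then $\mathbb{AG}(\mathbb{Z}_n)$ is not perfect.
   Context: For a commutative ring $R$ with unity, the annihilating-ideal graph $\mathbb{AG}(R)$ is the simple graph whose vertex set is the set of all non-zero ideals of $R$ with non-zero annihilator, two distinct vertices $I,J$ being adjacent if and only if $IJ=0$. A graph $G$ is perfect if $\omega(H)=\chi(H)$ for every induced subgraph $H$ of $G$. *)

(* Defs.v *)
From mathcomp Require Import all_boot all_order all_algebra.
Set Implicit Arguments. Unset Strict Implicit. Unset Printing Implicit Defensive.
Import GRing.Theory.
Local Open Scope ring_scope.

Section Graphs.
Variables (V : finType) (adj : rel V).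

Definition is_clique (C : {set V}) : Prop :=
  forall x y, x \in C -> y \in C -> x != y -> adj x y.

Definition clique_number (S : {set V}) (w : nat) : Prop :=
  (exists C : {set V}, C \subset S /\ is_clique C /\ #|C| = w) /\
  (forall C : {set V}, C \subset S -> is_clique C -> (#|C| <= w)%N).

Definition colorable (S : {set V}) (k : nat) : Prop :=
  exists f : V -> nat, (forall x, x \in S -> (f x < k)%N) /\
    (forall x y, x \in S -> y \in S -> x != y -> adj x y -> f x <> f y).

Definition chromatic_number (S : {set V}) (c : nat) : Prop :=
  colorable S c /\ (forall k, colorable S k -> (c <= k)%N).

Definition perfect (Vs : {set V}) : Prop :=
  forall S : {set V}, S \subset Vs ->
    exists w, clique_number S w /\ chromatic_number S w.
End Graphs.

Section AG.
Variable R : finComNzRingType.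

Definition is_ideal (I : {set R}) : bool :=
  [&& (0 : R) \in I,
      [forall x in I, forall y in I, (x - y) \in I] &
      [forall r : R, forall x in I, (r * x) \in I]].

Definition ann_nonzero (I : {set R}) : bool :=
  [exists a : R, (a != 0) && [forall x in I, a * x == 0]].

Definition AG_vertices : {set {set R}} :=
  [set I : {set R} | [&& is_ideal I, I != [set (0 : R)] & ann_nonzero I]].

(* I J = 0, i.e. every product x y (x in I, y in J) vanishes
   (equivalently the ideal generated by these products is zero) *)
Definition ideal_prod_zero (I J : {set R}) : bool :=
  [forall x in I, forall y in J, x * y == 0].

Definition AG_adj : rel {set R} :=
  fun I J => (I != J) && ideal_prod_zero I J.
End AG.

(* Main.v *)
Require Import Defs.
From mathcomp Require Import all_boot all_order all_algebra.
From mathcomp Require Import zify.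
From Stdlib Require Import ArithRing.

Lemma in5 (V : finType) (x c0 c1 c2 c3 c4 : V) :
  x \in [set c0; c1; c2; c3; c4] -> x = c0 \/ x = c1 \/ x = c2 \/ x = c3 \/ x = c4.
Proof.
rewrite !inE => H; repeat (case/orP: H => H); move/eqP: H => ->; tauto.
Qed.

Lemma odd5 (a b c d e : nat) : (a < 2 -> b < 2 -> c < 2 -> d < 2 -> e < 2 ->
  e <> a -> d <> e -> c <> d -> b <> c -> a <> b -> False)%N.
Proof. lia. Qed.

Lemma c5_not_perfect (V : finType) (adj : rel V) (Vs : {set V}) (c0 c1 c2 c3 c4 : V) :
  (forall x, ~~ adj x x) ->
  c0 \in Vs -> c1 \in Vs -> c2 \in Vs -> c3 \in Vs -> c4 \in Vs ->
  adj c0 c1 -> adj c1 c2 -> adj c2 c3 -> adj c3 c4 -> adj c4 c0 ->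
  ~~ adj c0 c2 -> ~~ adj c2 c0 -> ~~ adj c0 c3 -> ~~ adj c3 c0 ->
  ~~ adj c1 c3 -> ~~ adj c3 c1 -> ~~ adj c1 c4 -> ~~ adj c4 c1 ->
  ~~ adj c2 c4 -> ~~ adj c4 c2 ->
  ~ perfect adj Vs.
Proof.
move=> irr v0 v1 v2 v3 v4 a01 a12 a23 a34 a40 n02 n20 n03 n30 n13 n31 n14 n41 n24 n42 P.
have [] := P [set c0; c1; c2; c3; c4].
  by apply/subsetP=> x /in5 [->|[->|[->|[->|->]]]].
move=> w [[[C [sC [cC eC]]] _] [[f [fw fa]] _]].
have neq : forall x y, adj x y -> x != y.
  by move=> x y axy; apply/eqP=> exy; move: axy; rewrite exy (negbTE (irr y)).
have w2 : (w <= 2)%N.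
  rewrite leqNgt -eC; apply/negP => /card_gt2P [x [y [z [[xC yC zC] [xy yz zx]]]]].
  have Hxy := cC x y xC yC xy.
  have Hyz := cC y z yC zC yz; have Hzx := cC z x zC xC zx.
  have xS: x \in [set c0; c1; c2; c3; c4] by apply: (subsetP sC).
  have yS: y \in [set c0; c1; c2; c3; c4] by apply: (subsetP sC).
  have zS: z \in [set c0; c1; c2; c3; c4] by apply: (subsetP sC).
  move: Hxy Hyz Hzx.
  by case/in5: xS => [->|[->|[->|[->|->]]]]; case/in5: yS => [->|[->|[->|[->|->]]]];
    case/in5: zS => [->|[->|[->|[->|->]]]];
    rewrite ?(negbTE (irr _)) ?(negbTE n02) ?(negbTE n20) ?(negbTE n03) ?(negbTE n30)
     ?(negbTE n13) ?(negbTE n31) ?(negbTE n14) ?(negbTE n41) ?(negbTE n24) ?(negbTE n42).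
have inS : forall x, x \in [set c0; c1; c2; c3; c4] -> (f x < 2)%N.
  by move=> x /fw fx; apply: leq_trans fx w2.
have S0 : c0 \in [set c0; c1; c2; c3; c4] by rewrite !inE eqxx.
have S1 : c1 \in [set c0; c1; c2; c3; c4] by rewrite !inE eqxx !orbT.
have S2 : c2 \in [set c0; c1; c2; c3; c4] by rewrite !inE eqxx !orbT.
have S3 : c3 \in [set c0; c1; c2; c3; c4] by rewrite !inE eqxx !orbT.
have S4 : c4 \in [set c0; c1; c2; c3; c4] by rewrite !inE eqxx !orbT.
have := fa _ _ S0 S1 (neq _ _ a01) a01.
have := fa _ _ S1 S2 (neq _ _ a12) a12.
have := fa _ _ S2 S3 (neq _ _ a23) a23.
have := fa _ _ S3 S4 (neq _ _ a34) a34.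
have := fa _ _ S4 S0 (neq _ _ a40) a40.
move: (inS _ S0) (inS _ S1) (inS _ S2) (inS _ S3) (inS _ S4).
exact: odd5.
Qed.


Section Z.
Variable m : nat.
Local Notation N := m.+2.
Definition Id (d : nat) : {set 'Z_N} := [set x : 'Z_N | (d %| val x)%N].

Lemma dvdmod d x : (d %| N)%N -> (d %| x %% N)%N = (d %| x)%N.
Proof. by move=> dN; rewrite /dvdn (modn_dvdm _ dN). Qed.

Lemma valM (x y : 'Z_N) : val (x * y)%R = (val x * val y) %% N.
Proof. by []. Qed.
Lemma valB (x y : 'Z_N) : val (x - y)%R = (val x + (N - val y) %% N) %% N.
Proof. by []. Qed.

Lemma Id_vertex d : (d %| N)%N -> (1 < d)%N -> (d < N)%N -> Id d \in AG_vertices 'Z_N.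
Proof.
move=> dN d1 dlt; rewrite inE; apply/and3P; split.
- apply/and3P; split; first by rewrite inE /= dvdn0.
  + apply/forallP=> x; apply/implyP; rewrite inE => dx.
    apply/forallP=> y; apply/implyP; rewrite inE => dy.
    by rewrite inE valB dvdmod // dvdn_add // dvdmod // dvdn_sub.
  + apply/forallP=> r; apply/forallP=> x; apply/implyP; rewrite inE => dx.
    by rewrite inE valM dvdmod // dvdn_mull.
- apply/eqP => /setP /(_ (inZp d)); rewrite !inE /= modn_small // dvdnn.
  move/esym/eqP => /(congr1 val) /=; rewrite modn_small //; lia.
- apply/existsP; exists (inZp (N %/ d)); apply/andP; split.
  + apply/eqP => /(congr1 val) /=; rewrite modn_small.
      by move=> H; have := divnK dN; rewrite H mul0n.
    by rewrite ltn_Pdiv //; lia.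
  + apply/forallP=> x; apply/implyP; rewrite inE => /dvdnP [k xk].
    have lt : N %/ d < N by rewrite ltn_Pdiv.
    apply/eqP; apply: val_inj; rewrite valM xk /= (modn_small lt).
    have E := divnK dN.
    have -> : N %/ d * (k * d) = k * N by rewrite -{2}E; lia.
    by rewrite modnMl.
Qed.

Lemma Id_prod d e : (N %| d * e)%N -> ideal_prod_zero (Id d) (Id e).
Proof.
move=> Nde; apply/forallP=> x; apply/implyP; rewrite inE => /dvdnP [k xk].
apply/forallP=> y; apply/implyP; rewrite inE => /dvdnP [l yl].
apply/eqP; apply: val_inj; rewrite valM xk yl /=.
apply/eqP; rewrite -/(dvdn _ _).
have -> : k * d * (l * e) = (k * l) * (d * e) by lia.
exact: dvdn_mull.
Qed.

Lemma Id_nprod p d e : prime p -> (p %| N)%N -> ~~ (p %| d)%N -> ~~ (p %| e)%N ->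
  (d < N)%N -> (e < N)%N -> ~~ ideal_prod_zero (Id d) (Id e).
Proof.
move=> pp pN pd pe dN eN; apply/negP => /forallP /(_ (inZp d)) /implyP.
rewrite inE /= (modn_small dN) dvdnn => /(_ isT) /forallP /(_ (inZp e)) /implyP.
rewrite inE /= (modn_small eN) dvdnn => /(_ isT) /eqP /(congr1 val).
rewrite valM /= (modn_small dN) (modn_small eN) => /eqP; rewrite -/(dvdn _ _) => Nde.
have : (p %| d * e)%N by apply: dvdn_trans Nde.
by rewrite Euclid_dvdM // (negbTE pd) (negbTE pe).
Qed.
End Z.


Section NT.
Variable n : nat.
Hypothesis n0 : 0 < n.
Hypothesis Hk : 5 <= size (primes n).
Definition pp i := nth 0 (primes n) i.
Definition qq i := pp i ^ logn (pp i) n.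

Lemma pp_in {i} : i < 5 -> pp i \in primes n.
Proof. by move=> i5; apply: mem_nth; exact: (leq_trans i5 Hk). Qed.
Lemma pp_prime {i} : i < 5 -> prime (pp i).
Proof. by move/pp_in; rewrite mem_primes => /and3P []. Qed.
Lemma pp_dvd {i} : i < 5 -> pp i %| n.
Proof. by move/pp_in; rewrite mem_primes => /and3P []. Qed.
Lemma a_gt0 {i} : i < 5 -> 0 < logn (pp i) n.
Proof. by move/pp_in; rewrite logn_gt0. Qed.
Lemma qq_gt1 {i} : i < 5 -> 1 < qq i.
Proof.
move=> i5; have p1 := prime_gt1 (pp_prime i5).
have := @leq_pexp2l (pp i) 1 _ (ltnW p1) (a_gt0 i5); rewrite expn1 /qq; lia.
Qed.
Lemma qq_dvd i : qq i %| n.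
Proof. exact: pfactor_dvdnn. Qed.
Lemma pp_neq {i j} : i < 5 -> j < 5 -> i != j -> pp i != pp j.
Proof. by move=> i5 j5 ij; rewrite /pp nth_uniq ?primes_uniq //; [apply: (leq_trans i5 Hk)|apply: (leq_trans j5 Hk)]. Qed.
Lemma pp_ndvd_qq {i j} : i < 5 -> j < 5 -> i != j -> ~~ (pp i %| qq j).
Proof.
move=> i5 j5 ij; rewrite Euclid_dvdX ?pp_prime // dvdn_prime2 ?pp_prime //.
by rewrite (negbTE (pp_neq i5 j5 ij)).
Qed.
Lemma qq_coprime {i j} : i < 5 -> j < 5 -> i != j -> coprime (qq i) (qq j).
Proof.
move=> i5 j5 ij; rewrite /qq coprime_pexpl ?a_gt0 // coprime_pexpr ?a_gt0 //.
by rewrite prime_coprime ?pp_prime // dvdn_prime2 ?pp_prime // pp_neq.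
Qed.

Definition QQ := qq 0 * qq 1 * qq 2 * qq 3 * qq 4.
Lemma QQ_dvd : QQ %| n.
Proof.
have c := qq_coprime.
rewrite /QQ Gauss_dvd ?qq_dvd ?andbT; last by rewrite !coprimeMl !c.
rewrite Gauss_dvd ?qq_dvd ?andbT; last by rewrite !coprimeMl !c.
rewrite Gauss_dvd ?qq_dvd ?andbT; last by rewrite !coprimeMl !c.
by rewrite Gauss_dvd ?qq_dvd ?andbT // c.
Qed.
Definition rr := n %/ QQ.
Lemma nE : n = rr * QQ.
Proof. by rewrite /rr divnK // QQ_dvd. Qed.
Lemma rr_gt0 : 0 < rr.
Proof. by move: n0; rewrite nE; case: rr. Qed.
Lemma qq_QQ {i} : i < 5 -> qq i %| QQ.
Proof.
rewrite /QQ; case: i => [|[|[|[|[|//]]]]] _.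
- by rewrite -!mulnA; apply: dvdn_mulr.
- by rewrite -!mulnA; apply: dvdn_mull; apply: dvdn_mulr.
- by rewrite -!mulnA; do 2 apply: dvdn_mull; apply: dvdn_mulr.
- by rewrite -!mulnA; do 3 apply: dvdn_mull; apply: dvdn_mulr.
- by rewrite -!mulnA; do 4 apply: dvdn_mull.
Qed.
Lemma pp_ndvd_rr i : i < 5 -> ~~ (pp i %| rr).
Proof.
move=> i5; apply/negP => pr.
have H : pp i * qq i %| rr * QQ := dvdn_mul pr (qq_QQ i5).
by rewrite -nE /qq -expnS pfactor_dvdn ?pp_prime // ltnn in H.
Qed.
End NT.


Lemma gt1M a b : (1 < a -> 0 < b -> 1 < a * b)%N.
Proof. by move=> a1 b0; apply: (leq_trans a1); apply: leq_pmulr. Qed.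
Lemma ltM d a b : (b = d * a -> 1 < a -> 0 < d -> d < b)%N.
Proof. move=> -> a1 d0; rewrite -{1}(muln1 d) ltn_pmul2l //. Qed.

Lemma main_gen (m : nat) (p q : nat -> nat) (r : nat) :
  (forall i, i < 5 -> prime (p i))%N ->
  (forall i, i < 5 -> p i %| q i)%N ->
  (forall i j, i < 5 -> j < 5 -> i != j -> ~~ (p i %| q j))%N ->
  (forall i, i < 5 -> ~~ (p i %| r))%N ->
  (forall i, i < 5 -> 1 < q i)%N ->
  (0 < r)%N ->
  m.+2 = (r * (q 0 * q 1 * q 2 * q 3 * q 4))%N ->
  ~ perfect (@AG_adj 'Z_(m.+2)) (AG_vertices 'Z_(m.+2)).
Proof.
move=> Hp Hpq Hnd Hr Hq r0 nE.
have pN : forall i, (i < 5 -> p i %| m.+2)%N.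
  move=> i i5; rewrite nE !Euclid_dvdM ?Hp //.
  by case: i i5 => [|[|[|[|[|//]]]]] _; rewrite Hpq ?orbT.
pose d0 := (q 2 * q 3 * q 4 * r)%N.
pose d1 := (q 0 * q 1 * q 4 * r)%N.
pose d2 := (q 1 * q 2 * q 3 * r)%N.
pose d3 := (q 0 * q 3 * q 4 * r)%N.
pose d4 := (q 0 * q 1 * q 2 * r)%N.
have q0 : forall i, (i < 5 -> 0 < q i)%N by move=> i /Hq; lia.
have vert : forall d a b, (m.+2 = d * (q a * q b) -> a < 5 -> b < 5 -> 1 < d ->
    Id m d \in AG_vertices 'Z_(m.+2))%N.
  move=> d a b E a5 b5 dg; apply: Id_vertex => //.
  - by apply/dvdnP; exists (q a * q b); rewrite {1}E mulnC.
  - apply: ltM E _ _; last exact: ltnW.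
    by apply: gt1M; [apply: Hq | apply: q0].
have nd : forall i d, (i < 5 -> ~~ (p i %| d) -> ~~ (p i %| m.+2) -> False)%N.
  by move=> i d i5 _ /negP; apply; apply: pN.
have g4 : forall a b c, (a < 5 -> b < 5 -> c < 5 -> 1 < q a * q b * q c * r)%N.
  move=> a b c a5 b5 c5; apply: gt1M => //; apply: gt1M; last exact: q0.
  by apply: gt1M; [apply: Hq | apply: q0].
have ndv : forall i a b c, (i < 5 -> a < 5 -> b < 5 -> c < 5 -> i != a -> i != b -> i != c ->
    ~~ (p i %| q a * q b * q c * r))%N.
  move=> i a b c i5 a5 b5 c5 ia ib ic.
  by rewrite !Euclid_dvdM ?Hp // (negbTE (Hnd i a _ _ _)) // (negbTE (Hnd i b _ _ _)) //
    (negbTE (Hnd i c _ _ _)) // (negbTE (Hr _ _)).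
have dlt : forall d a b, (m.+2 = d * (q a * q b) -> a < 5 -> b < 5 -> 1 < d -> d < m.+2)%N.
  move=> d a b E a5 b5 dg; apply: ltM E _ _; last exact: ltnW.
  by apply: gt1M; [apply: Hq | apply: q0].
have adjH : forall d e i, (m.+2 %| d * e)%N -> (i < 5)%N -> ~~ (p i %| e)%N -> (e < m.+2)%N ->
    AG_adj (Id m d) (Id m e).
  move=> d e i Nde i5 ne elt; rewrite /AG_adj Id_prod // andbT.
  apply/eqP => E; have := @Id_prod m _ _ Nde; rewrite E.
  by apply/negP; apply: (@Id_nprod m (p i) e e (Hp i i5) (pN i i5) ne ne elt elt).
have nadj : forall d e i, (i < 5)%N -> ~~ (p i %| d)%N -> ~~ (p i %| e)%N -> (d < m.+2)%N -> (e < m.+2)%N ->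
    ~~ AG_adj (Id m d) (Id m e).
  move=> d e i i5 nd0 ne dlt1 elt.
  by rewrite /AG_adj (negbTE (@Id_nprod m (p i) d e (Hp i i5) (pN i i5) nd0 ne dlt1 elt)) andbF.
have E0 : m.+2 = (d0 * (q 0 * q 1))%N by rewrite nE /d0 -!multE; ring.
have E1 : m.+2 = (d1 * (q 2 * q 3))%N by rewrite nE /d1 -!multE; ring.
have E2 : m.+2 = (d2 * (q 4 * q 0))%N by rewrite nE /d2 -!multE; ring.
have E3 : m.+2 = (d3 * (q 1 * q 2))%N by rewrite nE /d3 -!multE; ring.
have E4 : m.+2 = (d4 * (q 3 * q 4))%N by rewrite nE /d4 -!multE; ring.
have G0 : (1 < d0)%N by apply: g4.
have G1 : (1 < d1)%N by apply: g4.
have G2 : (1 < d2)%N by apply: g4.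
have G3 : (1 < d3)%N by apply: g4.
have G4 : (1 < d4)%N by apply: g4.
have L0 := dlt _ _ _ E0 isT isT G0.
have L1 := dlt _ _ _ E1 isT isT G1.
have L2 := dlt _ _ _ E2 isT isT G2.
have L3 := dlt _ _ _ E3 isT isT G3.
have L4 := dlt _ _ _ E4 isT isT G4.
have N00 : ~~ (p 0 %| d0)%N by apply: ndv.
have N01 : ~~ (p 1 %| d0)%N by apply: ndv.
have N12 : ~~ (p 2 %| d1)%N by apply: ndv.
have N13 : ~~ (p 3 %| d1)%N by apply: ndv.
have N20 : ~~ (p 0 %| d2)%N by apply: ndv.
have N24 : ~~ (p 4 %| d2)%N by apply: ndv.
have N31 : ~~ (p 1 %| d3)%N by apply: ndv.
have N32 : ~~ (p 2 %| d3)%N by apply: ndv.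
have N43 : ~~ (p 3 %| d4)%N by apply: ndv.
have N44 : ~~ (p 4 %| d4)%N by apply: ndv.
have P01 : (m.+2 %| d0 * d1)%N.
  by apply/dvdnP; exists (q 4 * r)%N; rewrite nE /d0 /d1 -!multE; ring.
have P12 : (m.+2 %| d1 * d2)%N.
  by apply/dvdnP; exists (q 1 * r)%N; rewrite nE /d1 /d2 -!multE; ring.
have P23 : (m.+2 %| d2 * d3)%N.
  by apply/dvdnP; exists (q 3 * r)%N; rewrite nE /d2 /d3 -!multE; ring.
have P34 : (m.+2 %| d3 * d4)%N.
  by apply/dvdnP; exists (q 0 * r)%N; rewrite nE /d3 /d4 -!multE; ring.
have P40 : (m.+2 %| d4 * d0)%N.
  by apply/dvdnP; exists (q 2 * r)%N; rewrite nE /d4 /d0 -!multE; ring.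
apply: (@c5_not_perfect _ _ _ (Id m d0) (Id m d1) (Id m d2) (Id m d3) (Id m d4)).
- by move=> x; rewrite /AG_adj eqxx.
- exact: (vert _ _ _ E0).
- exact: (vert _ _ _ E1).
- exact: (vert _ _ _ E2).
- exact: (vert _ _ _ E3).
- exact: (vert _ _ _ E4).
- exact: (adjH _ _ 2 P01).
- exact: (adjH _ _ 0 P12).
- exact: (adjH _ _ 1 P23).
- exact: (adjH _ _ 3 P34).
- exact: (adjH _ _ 0 P40).
- exact: (nadj _ _ 0).
- exact: (nadj _ _ 0).
- exact: (nadj _ _ 1).
- exact: (nadj _ _ 1).
- exact: (nadj _ _ 2).
- exact: (nadj _ _ 2).
- exact: (nadj _ _ 3).
- exact: (nadj _ _ 3).
- exact: (nadj _ _ 4).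
- exact: (nadj _ _ 4).
Qed.

Theorem lemma1 (n : nat) (Hk : (5 <= size (primes n))%N) :
  ~ perfect (@AG_adj 'Z_n) (AG_vertices 'Z_n).
Proof.
case: n Hk => [|[|m]] Hk; [by [] | by [] |].
have n0 : (0 < m.+2)%N by [].
have H1 : forall i, (i < 5)%N -> prime (pp m.+2 i) by move=> i i5; exact: (@pp_prime m.+2 Hk i i5).
have H2 : forall i, (i < 5 -> pp m.+2 i %| qq m.+2 i)%N.
  move=> i i5; rewrite /qq Euclid_dvdX; last exact: (@pp_prime m.+2 Hk i i5).
  by rewrite dvdnn (@a_gt0 m.+2 Hk i i5).
have H3 : forall i j, (i < 5 -> j < 5 -> i != j -> ~~ (pp m.+2 i %| qq m.+2 j))%N.
  by move=> i j i5 j5 ij; exact: (@pp_ndvd_qq m.+2 Hk i j i5 j5 ij).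
have H4 : forall i, (i < 5 -> ~~ (pp m.+2 i %| rr m.+2))%N.
  by move=> i i5; exact: (@pp_ndvd_rr m.+2 n0 Hk i i5).
have H5 : forall i, (i < 5 -> 1 < qq m.+2 i)%N.
  by move=> i i5; exact: (@qq_gt1 m.+2 n0 Hk i i5).
have H6 : m.+2 = (rr m.+2 * (qq m.+2 0 * qq m.+2 1 * qq m.+2 2 * qq m.+2 3 * qq m.+2 4))%N := @nE m.+2 Hk.
have H7 := @rr_gt0 m.+2 n0 Hk.
have := @main_gen m (pp m.+2) (qq m.+2) (rr m.+2) H1 H2 H3 H4 H5 H7 H6.
exact.
Qed.
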